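(* Let $(A^1,B^1)$ be an $n_1\times m_1$ bimatrix game and $(A^2,B^2)$ an $n_2\times m_2$ bimatrix game, and let $(A,B)=(A^1,B^1)\times(A^2,B^2)$ be their product game. If $(x,y)$ is a Nash equilibrium of $(A,B)$, then $(x^1,y^1)$ defined by $x^1_i=\sum_{l=1}^{n_2}x_{[i,l]}$ for $1\le i\le n_1$ and $y^1_j=\sum_{l=1}^{m_2}y_{[j,l]}$ for $1\le j\le m_1$ is a Nash equilibrium of $(A^1,B^1)$.
   Context: An $n\times m$ bimatrix game $(A,B)$ consists of two real $n\times m$ matrices. A mixed strategy of the row player is a probability vector $x\in\Delta_n=\{x\in\mathbb{R}^n_{\ge 0}:\sum_i x_i=1\}$, of the column player $y\in\Delta_m$; the expected payoffs are $x^TAy$ (row player) and $x^TBy$ (column player). $(x,y)$ is a Nash equilibrium if $x^TAy\ge \hat x^TAy$ for all $\hat x\in\Delta_n$ and $x^TBy\ge x^TB\hat y$ for all $\hat y\in\Delta_m$. For index ranges $\{1,\dots,p\}\times\{1,\dots,q\}$, the pairing $[i,j]=(i-1)q+j$ is the standard bijection onto $\{1,\dots,pq\}$. The product game $(A^1,B^1)\times(A^2,B^2)$ of an $n_1\times m_1$ game and an $n_2\times m_2$ game is the $(n_1n_2)\times(m_1m_2)$ game $(A,B)$ with $A_{[i_1,i_2],[j_1,j_2]}=A^1_{i_1j_1}+A^2_{i_2j_2}$ and $B_{[i_1,i_2],[j_1,j_2]}=B^1_{i_1j_1}+B^2_{i_2j_2}$ (rows indexed via the pairing on $\{1..n_1\}\times\{1..n_2\}$,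 columns via the pairing on $\{1..m_1\}\times\{1..m_2\}$). *)

(* Defs.v *)
From mathcomp Require Import all_boot all_order all_algebra.
Set Implicit Arguments. Unset Strict Implicit. Unset Printing Implicit Defensive.
Import Order.TTheory GRing.Theory Num.Theory.
Local Open Scope ring_scope.

Definition is_strategy (R : realFieldType) (n : nat) (x : 'cV[R]_n) : Prop :=
  (forall i, 0 <= x i 0) /\ \sum_(i < n) x i 0 = 1.

Definition payoff (R : realFieldType) (n m : nat) (M : 'M[R]_(n, m))
  (x : 'cV[R]_n) (y : 'cV[R]_m) : R := (x^T *m M *m y) 0 0.

Definition nash_eq (R : realFieldType) (n m : nat) (A B : 'M[R]_(n, m))
  (x : 'cV[R]_n) (y : 'cV[R]_m) : Prop :=
  is_strategy x /\ is_strategy y /\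
  (forall xh : 'cV[R]_n, is_strategy xh -> payoff A xh y <= payoff A x y) /\
  (forall yh : 'cV[R]_m, is_strategy yh -> payoff B x yh <= payoff B x y).

(* The pairing [i,j] = (i-1)q + j, in 0-based form: i*q + j. *)
Lemma pair_idx_lt (p q : nat) (i : 'I_p) (j : 'I_q) : (i * q + j < p * q)%N.
Proof.
case: i => i /= Hi; case: j => j /= Hj.
have H1 : (i * q + j < i * q + q)%N by rewrite ltn_add2l.
apply: (leq_trans H1); rewrite addnC -mulSn; exact: leq_mul.
Qed.

Definition pair_idx (p q : nat) (i : 'I_p) (j : 'I_q) : 'I_(p * q) :=
  Ordinal (pair_idx_lt i j).

(* Product game matrix: M_{[i1,i2],[j1,j2]} = M1_{i1 j1} + M2_{i2 j2}. *)
Definition prod_mx (R : realFieldType) (n1 m1 n2 m2 : nat)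
  (M1 : 'M[R]_(n1, m1)) (M2 : 'M[R]_(n2, m2)) : 'M[R]_(n1 * n2, m1 * m2) :=
  \matrix_(r, c)
    \sum_(i1 < n1) \sum_(i2 < n2) \sum_(j1 < m1) \sum_(j2 < m2)
      (if (r == pair_idx i1 i2) && (c == pair_idx j1 j2)
       then M1 i1 j1 + M2 i2 j2 else 0).

Definition marg1 (R : realFieldType) (p q : nat) (x : 'cV[R]_(p * q)) : 'cV[R]_p :=
  \col_(i < p) \sum_(l < q) x (pair_idx i l) 0.
Arguments marg1 {R} p q x.

(* Main.v *)
Require Import Defs.
From mathcomp Require Import all_boot all_order all_algebra.
Set Implicit Arguments. Unset Strict Implicit. Unset Printing Implicit Defensive.
Import Order.TTheory GRing.Theory Num.Theory.
Local Open Scope ring_scope.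

Lemma sum_nat_pair (R : realFieldType) (p q : nat) (G : nat -> R) :
  \sum_(0 <= k < p * q) G k = \sum_(i < p) \sum_(j < q) G (i * q + j)%N.
Proof.
elim: p => [|p IH]; first by rewrite mul0n big_geq // big_ord0.
rewrite big_ord_recr /= -IH mulSnr (big_cat_nat _ (leq_addr _ _)) //=.
congr (_ + _).
rewrite -{1}(add0n (p * q)%N) big_addn addKn big_mkord.
by apply: eq_bigr => j _; rewrite addnC.
Qed.

Lemma sum_pair (R : realFieldType) (p q : nat) (F : 'I_(p * q) -> R) :
  \sum_(r < p * q) F r = \sum_(i < p) \sum_(j < q) F (pair_idx i j).
Proof.
pose G k := if @insub _ (fun k => (k < p * q)%N) 'I_(p * q) k is Some r then F r else 0.
have GE : forall r : 'I_(p * q), G (val r) = F r by move=> r; rewrite /G valK.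
rewrite (eq_bigr (fun r : 'I_(p*q) => G (val r))); last by move=> r _; rewrite GE.
rewrite -(big_mkord xpredT G) sum_nat_pair.
apply: eq_bigr => i _; apply: eq_bigr => j _.
by rewrite -GE.
Qed.

Lemma pair_idx_inj (p q : nat) (i k : 'I_p) (j l : 'I_q) :
  (pair_idx i j == pair_idx k l) = (i == k) && (j == l).
Proof.
apply/eqP/andP => [H|[/eqP -> /eqP ->] //].
have H' : (i * q + j = k * q + l)%N by move: H => /(congr1 val).
have q0 : (0 < q)%N by apply: leq_ltn_trans (ltn_ord j).
have Hd := congr1 (fun n => n %/ q)%N H'.
have Hm := congr1 (fun n => n %% q)%N H'.
rewrite /= !divnMDl // !divn_small // !addn0 in Hd.
rewrite /= !modnMDl !modn_small // in Hm.
by split; apply/eqP; apply: val_inj.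
Qed.

Lemma sum_only (R : realFieldType) (n : nat) (i : 'I_n) (F : 'I_n -> R) :
  (forall k, i != k -> F k = 0) -> \sum_k F k = F i.
Proof.
move=> H; rewrite (bigD1 i) //= big1 ?addr0 // => k; rewrite eq_sym => /H //.
Qed.

Lemma prod_mxE (R : realFieldType) (n1 m1 n2 m2 : nat)
  (M1 : 'M[R]_(n1, m1)) (M2 : 'M[R]_(n2, m2)) i1 i2 j1 j2 :
  prod_mx M1 M2 (pair_idx i1 i2) (pair_idx j1 j2) = M1 i1 j1 + M2 i2 j2.
Proof.
rewrite mxE (@sum_only _ _ i1); last first.
  move=> k Hk; apply: big1 => a _; apply: big1 => b _; apply: big1 => c _.
  by rewrite pair_idx_inj (negbTE Hk).
rewrite (@sum_only _ _ i2); last first.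
  move=> k Hk; apply: big1 => b _; apply: big1 => c _.
  by rewrite pair_idx_inj (negbTE Hk) andbF.
rewrite (@sum_only _ _ j1); last first.
  move=> k Hk; apply: big1 => c _.
  by rewrite pair_idx_inj (pair_idx_inj j1) (negbTE Hk) andbF.
rewrite (@sum_only _ _ j2); last first.
  move=> k Hk.
  by rewrite pair_idx_inj (pair_idx_inj j1) (negbTE Hk) !andbF.
by rewrite !eqxx.
Qed.

Definition lift2 (R : realFieldType) (p q : nat) (f : 'I_p -> 'I_q -> R) : 'cV[R]_(p * q) :=
  \col_r \sum_(i < p) \sum_(j < q) (if r == pair_idx i j then f i j else 0).

Lemma lift2E (R : realFieldType) (p q : nat) (f : 'I_p -> 'I_q -> R) i j :
  lift2 f (pair_idx i j) 0 = f i j.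
Proof.
rewrite mxE (@sum_only _ _ i); last first.
  by move=> k Hk; apply: big1 => a _; rewrite pair_idx_inj (negbTE Hk).
rewrite (@sum_only _ _ j); last first.
  by move=> k Hk; rewrite pair_idx_inj (negbTE Hk) andbF.
by rewrite eqxx.
Qed.

Definition marg2 (R : realFieldType) (p q : nat) (x : 'cV[R]_(p * q)) : 'cV[R]_q :=
  \col_(j < q) \sum_(i < p) x (pair_idx i j) 0.

Lemma payoffE (R : realFieldType) (n m : nat) (M : 'M[R]_(n, m)) x y :
  payoff M x y = \sum_i \sum_j x i 0 * M i j * y j 0.
Proof.
rewrite /payoff mxE exchange_big /=.
apply: eq_bigr => j _; rewrite mxE mulr_suml; apply: eq_bigr => i _.
by rewrite mxE.
Qed.

Lemma payoff_prod (R : realFieldType) (n1 m1 n2 m2 : nat)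
  (M1 : 'M[R]_(n1, m1)) (M2 : 'M[R]_(n2, m2)) x y :
  payoff (prod_mx M1 M2) x y =
  payoff M1 (marg1 n1 n2 x) (marg1 m1 m2 y) + payoff M2 (marg2 x) (marg2 y).
Proof.
rewrite !payoffE sum_pair.
transitivity (\sum_i1 \sum_i2 \sum_j1 \sum_j2
  (x (pair_idx i1 i2) 0 * M1 i1 j1 * y (pair_idx j1 j2) 0 +
   x (pair_idx i1 i2) 0 * M2 i2 j2 * y (pair_idx j1 j2) 0)).
  apply: eq_bigr => i1 _; apply: eq_bigr => i2 _; rewrite sum_pair.
  apply: eq_bigr => j1 _; apply: eq_bigr => j2 _.
  by rewrite prod_mxE mulrDr mulrDl.
under eq_bigr => i1 _ do under eq_bigr => i2 _ do under eq_bigr => j1 _ do rewrite big_split.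
under eq_bigr => i1 _ do under eq_bigr => i2 _ do rewrite big_split.
under eq_bigr => i1 _ do rewrite big_split.
rewrite big_split /=; congr (_ + _).
  apply: eq_bigr => i1 _; rewrite exchange_big /=; apply: eq_bigr => j1 _.
  rewrite /marg1 /marg2 !mxE !mulr_suml; apply: eq_bigr => i2 _.
  rewrite mulr_sumr; apply: eq_bigr => j2 _; done.
under eq_bigr => i1 _ do under eq_bigr => i2 _ do rewrite exchange_big.
rewrite exchange_big /=; apply: eq_bigr => i2 _.
rewrite exchange_big /=; apply: eq_bigr => j2 _.
rewrite /marg1 /marg2 !mxE !mulr_suml; apply: eq_bigr => i1 _.
rewrite mulr_sumr; apply: eq_bigr => j1 _; done.
Qed.

Lemma marg1_strat (R : realFieldType) (p q : nat) (x : 'cV[R]_(p * q)) :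
  is_strategy x -> is_strategy (marg1 p q x).
Proof.
move=> [H0 H1]; split.
  by move=> i; rewrite mxE; apply: sumr_ge0 => l _.
rewrite -H1 sum_pair; apply: eq_bigr => i _; by rewrite mxE.
Qed.

Lemma marg2_strat (R : realFieldType) (p q : nat) (x : 'cV[R]_(p * q)) :
  is_strategy x -> is_strategy (marg2 x).
Proof.
move=> [H0 H1]; split.
  by move=> i; rewrite mxE; apply: sumr_ge0 => l _.
rewrite -H1 sum_pair exchange_big; apply: eq_bigr => i _; by rewrite mxE.
Qed.

Lemma lift_strat (R : realFieldType) (p q : nat) (a : 'cV[R]_p) (b : 'cV[R]_q) :
  is_strategy a -> is_strategy b -> is_strategy (lift2 (fun i j => a i 0 * b j 0)).
Proof.
move=> [Ha0 Ha1] [Hb0 Hb1]; split.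
  move=> r; rewrite mxE; apply: sumr_ge0 => i _; apply: sumr_ge0 => j _.
  by case: ifP => // _; apply: mulr_ge0.
rewrite sum_pair.
under eq_bigr => i _ do under eq_bigr => j _ do rewrite lift2E.
under eq_bigr => i _ do rewrite -mulr_sumr Hb1 mulr1.
by [].
Qed.

Lemma marg1_lift (R : realFieldType) (p q : nat) (a : 'cV[R]_p) (b : 'cV[R]_q) :
  is_strategy b -> marg1 p q (lift2 (fun i j => a i 0 * b j 0)) = a.
Proof.
move=> [_ Hb1]; apply/matrixP => i k; rewrite (ord1 k) mxE.
under eq_bigr => j _ do rewrite lift2E.
by rewrite -mulr_sumr Hb1 mulr1.
Qed.

Lemma marg2_lift (R : realFieldType) (p q : nat) (a : 'cV[R]_p) (b : 'cV[R]_q) :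
  is_strategy a -> marg2 (lift2 (fun i j => a i 0 * b j 0)) = b.
Proof.
move=> [_ Ha1]; apply/matrixP => j k; rewrite (ord1 k) mxE.
under eq_bigr => i _ do rewrite lift2E.
by rewrite -mulr_suml Ha1 mul1r.
Qed.

Theorem theorem3 (R : realFieldType) (n1 m1 n2 m2 : nat)
  (A1 B1 : 'M[R]_(n1, m1)) (A2 B2 : 'M[R]_(n2, m2))
  (x : 'cV[R]_(n1 * n2)) (y : 'cV[R]_(m1 * m2)) :
  nash_eq (prod_mx A1 A2) (prod_mx B1 B2) x y ->
  nash_eq A1 B1 (marg1 n1 n2 x) (marg1 m1 m2 y).
Proof.
move=> [sx [sy [Hx Hy]]].
split; first exact: marg1_strat.
split; first exact: marg1_strat.
have sx2 := marg2_strat sx; have sy2 := marg2_strat sy.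
split.
  move=> xh1 Hxh1.
  have := Hx _ (lift_strat Hxh1 sx2).
  by rewrite !payoff_prod marg1_lift // marg2_lift // lerD2r.
move=> yh1 Hyh1.
have := Hy _ (lift_strat Hyh1 sy2).
by rewrite !payoff_prod marg1_lift // marg2_lift // lerD2r.
Qed.
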